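(* Let $G$ be a finite group of $F$-class $c \ge 1$ with covering group $G^*$ (with respect to some finite generating tuple of $G$). If $H$ is any descendant of $G$, then $H \cong G^*/U$ for some allowable subgroup $U$ of $G^*$.
   Context: For a finite group $X$, $F(X)$ is its Fitting subgroup; the $F$-central series is $\nu_0(X)=F(X)$ and $\nu_{i+1}(X)$ is the smallest normal subgroup $N'$ of $F(X)$ with $N'\le\nu_i(X)$ such that $\nu_i(X)/N'$ is centralized by $F(X)$ and is a direct product of elementary abelian groups; the $F$-class is the least $c$ with $\nu_c(X)=1$, and the $F$-rank is $|\nu_0(X)/\nu_1(X)|$. Covering group: with $g_1,\dots,g_n$ generating $G$, $F$ free on $f_1,\dots,f_n$, $\mu:F\to G$, $f_i\mapsto g_i$, $R=\ker\mu$, $L=\mu^{-1}(F(G))$, $k$ the product of the distinct primes dividing the $F$-rank of $G$: $G^*=F/[R,L]R^k$, $M=R/[R,L]R^k$. The nucleus is $N=\nu_c(G^* )$. A subgroup $U$ of $G^*$ is allowable if $U$ is a proper subgroup of $M$, normal in $G^*$, with $M=NU$. A group $H$ is a descendant of $G$ if $H$ has $F$-class $c+1$ and $H/\nu_c(H)\cong G$. *)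

(* Defs.v *)
From HB Require Import structures.
From mathcomp Require Import all_boot all_fingroup all_solvable.
Set Implicit Arguments. Unset Strict Implicit. Unset Printing Implicit Defensive.
Local Open Scope group_scope.

(* A finite group that is a direct product of elementary abelian groups:
   abelian, and each Sylow (= p-primary) component is elementary abelian. *)
(* (For primes p not dividing #|Q|, 'O_p(Q) = 1 is trivially elementary
   abelian, so only p in primes #|Q| need checking.) *)
Definition dprod_elem_abelian (qT : finGroupType) (Q : {set qT}) : bool :=
  abelian Q && all (fun p => p.-abelem 'O_p(Q)) (primes #|Q|).

Definition Fcentral_step_cond (gT : finGroupType) (X V N : {group gT}) : bool :=
  [&& N <| 'F(X), N \subset V,
      'F(X) / N \subset 'C(V / N) & dprod_elem_abelian (V / N)].

(* F-central series: nu_0(X) = F(X), nu_{i+1}(X) = smallest N' satisfying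
   the condition, i.e. the intersection of all such N'. *)
Fixpoint Fseries (gT : finGroupType) (X : {group gT}) (i : nat) : {group gT} :=
  match i with
  | 0 => 'F(X)%G
  | i'.+1 =>
      (\bigcap_(N : {group gT} |
          Fcentral_step_cond X (Fseries X i') N) N)%G
  end.

Definition Fclass (gT : finGroupType) (X : {group gT}) (c : nat) : Prop :=
  Fseries X c = 1%G /\ (forall i, i < c -> Fseries X i != 1%G).

Definition Frank (gT : finGroupType) (X : {group gT}) : nat :=
  #|Fseries X 0 : Fseries X 1|.

Definition Fk (gT : finGroupType) (G : {group gT}) : nat :=
  \prod_(p <- primes (Frank G)) p.

(* Conditions on a finite group X with n-tuple x and morphism rho : X -> G
   sending x_i to g_i, mirroring the quotient F/[R,L]R^k: X is generated by x,
   the kernel M of rho satisfies [M, rho^-1(F(G))] = 1 and M^k = 1. *)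
Definition cover_cond (gT xT : finGroupType) (G : {group gT}) (n : nat)
    (g : n.-tuple gT) (X : {group xT}) (x : n.-tuple xT)
    (rho : {morphism X >-> gT}) : Prop :=
  [/\ X :=: <<[set y in x]>>,
      (forall i : 'I_n, rho (tnth x i) = tnth g i),
      [~: 'ker rho, rho @*^-1 'F(G)] = 1
    & exponent ('ker rho) %| Fk G].

(* (Gs, gs, pi) is the covering group G^* = F/[R,L]R^k of G w.r.t. the
   generating tuple g, given by the universal property of F/[R,L]R^k:
   the map f_i |-> gs_i induces G^* ~= F/[R,L]R^k with pi induced by mu. *)
Definition is_covering_group (gT sT : finGroupType) (G : {group gT}) (n : nat)
    (g : n.-tuple gT) (Gs : {group sT}) (gs : n.-tuple sT)
    (pi : {morphism Gs >-> gT}) : Prop :=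
  cover_cond G g gs pi /\
  (forall (xT : finGroupType) (X : {group xT}) (x : n.-tuple xT)
          (rho : {morphism X >-> gT}),
      cover_cond G g x rho ->
      exists phi : {morphism Gs >-> xT},
        forall i : 'I_n, phi (tnth gs i) = tnth x i).

Definition descendant (gT hT : finGroupType) (G : {group gT}) (c : nat)
    (H : {group hT}) : Prop :=
  Fclass H c.+1 /\ (H / Fseries H c) \isog G.

Definition allowable (sT gT : finGroupType) (Gs : {group sT})
    (pi : {morphism Gs >-> gT}) (c : nat) (U : {group sT}) : Prop :=
  [/\ U \proper 'ker pi, U <| Gs & 'ker pi = Fseries Gs c * U].

(* Main.v *)
Require Import Defs.
From HB Require Import structures.
From mathcomp Require Import all_boot all_fingroup all_solvable.
Set Implicit Arguments. Unset Strict Implicit. Unset Printing Implicit Defensive.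
Local Open Scope group_scope.

Definition condp (gT : finGroupType) (F V N : {set gT}) : Prop :=
  [/\ N <| F, N \subset V, [~: V, F] \subset N &
      forall x p, x \in V -> prime p -> (x.`_p) ^+ p \in N].

Lemma constt_p_triv (gT : finGroupType) (Q : {group gT}) y p :
  y \in Q -> prime p -> ~~ (p %| #|Q|) -> y.`_p = 1.
Proof.
move=> yQ pr np; apply/constt1P; apply: pnat_dvd (order_dvdG yQ) _.
by rewrite p'natE.
Qed.

Lemma cond_iff (gT : finGroupType) (X V N : {group gT}) :
  V <| 'F(X) -> (Fcentral_step_cond X V N <-> condp 'F(X) V N).
Proof.
move=> nVF; have [sVF nFV] := andP nVF.
split.
  case/and4P=> nNF sNV cFV dea; have [sNF nNF'] := andP nNF.
  have nNV : V \subset 'N(N) := subset_trans sVF nNF'.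
  split=> //.
    by rewrite commGC -quotient_cents2.
  move=> x p xV pr.
  have xN : x \in 'N(N) := subsetP nNV x xV.
  apply: coset_idr; first by rewrite groupX // /constt groupX.
  rewrite morphX /=; last by rewrite /constt groupX.
  rewrite morph_constt //.
  have yQ : coset N x \in V / N by apply: mem_quotient.
  case/andP: dea => abQ /allP allQ.
  have [pQ | npQ] := boolP (p \in primes #|V / N|).
    have := allQ p pQ => /(abelemP pr) [_ ->] //.
    have sQ : (coset N x).`_p \in V / N by rewrite /constt groupX.
    have : <[(coset N x).`_p]> \subset 'O_p(V / N).
      apply: pcore_max; first exact: p_elt_constt.
      by rewrite -sub_abelian_normal // cycle_subG.
    by rewrite cycle_subG.
  rewrite (constt_p_triv yQ pr) ?expg1n //.
  by move: npQ; rewrite mem_primes pr cardG_gt0.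
case=> nNF sNV cVF pw; have [sNF nNF'] := andP nNF.
have nNV : V \subset 'N(N) := subset_trans sVF nNF'.
have cQ : 'F(X) / N \subset 'C(V / N) by rewrite quotient_cents2 // commGC.
apply/and4P; split=> //.
have abQ : abelian (V / N) := subset_trans (quotientS N sVF) cQ.
apply/andP; split=> //; apply/allP=> p; rewrite mem_primes => /andP[pr _].
apply/(abelemP pr); split; first exact: abelianS (pcore_sub _ _) abQ.
move=> z zO; have zQ : z \in V / N := subsetP (pcore_sub _ _) z zO.
have pz : p.-elt z := mem_p_elt (pcore_pgroup _ _) zO.
case/morphimP: zQ pz => x xN xV -> pz.
rewrite -(constt_p_elt pz) -morph_constt // -morphX ?groupX //.
by apply: coset_id; apply: pw.
Qed.
Lemma cond_self (gT : finGroupType) (F V : {group gT}) : V <| F -> condp F V V.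
Proof.
move=> nVF; have [sVF nFV] := andP nVF; split=> //.
  by rewrite commg_subl.
by move=> x p xV _; rewrite /constt !groupX.
Qed.

Lemma Fseries_step (gT : finGroupType) (X : {group gT}) i :
  Fseries X i <| 'F(X) ->
  condp 'F(X) (Fseries X i) (Fseries X i.+1).
Proof.
move=> nVF; have [sVF nFV] := andP nVF.
set V := Fseries X i.
have cV : Fcentral_step_cond X V V by apply/cond_iff => //; apply: cond_self.
have sBV : Fseries X i.+1 \subset V by rewrite /= (bigcap_inf V cV).
have cN : forall N : {group gT}, Fcentral_step_cond X V N -> condp 'F(X) V N.
  by move=> N /cond_iff; apply.
split=> //.
- rewrite /normal (subset_trans sBV sVF) /=.
  apply: norms_bigcap; apply/bigcapsP => N /cN [/andP[_ ->] _ _ _] //.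
- by apply/bigcapsP => N /cN [].
- move=> x p xV pr; apply/bigcapP => N /cN [_ _ _]; exact.
Qed.

Lemma Fseries_normal (gT : finGroupType) (X : {group gT}) i :
  Fseries X i <| 'F(X).
Proof.
elim: i => [|i IH]; first exact: normal_refl.
by case: (Fseries_step IH).
Qed.

Lemma Fseries_cond (gT : finGroupType) (X : {group gT}) i :
  condp 'F(X) (Fseries X i) (Fseries X i.+1).
Proof. exact: Fseries_step (Fseries_normal X i). Qed.

Lemma Fseries_min (gT : finGroupType) (X N : {group gT}) i :
  condp 'F(X) (Fseries X i) N -> Fseries X i.+1 \subset N.
Proof.
move=> cN; rewrite /=; apply: bigcap_inf.
by apply/cond_iff => //; apply: Fseries_normal.
Qed.

Lemma Fseries_sub1 (gT : finGroupType) (X : {group gT}) i :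
  Fseries X i.+1 \subset Fseries X i.
Proof. by case: (Fseries_cond X i). Qed.

Lemma Fseries_decr (gT : finGroupType) (X : {group gT}) i j :
  i <= j -> Fseries X j \subset Fseries X i.
Proof.
move=> /subnKC <-; elim: (j - i) => [|k IH]; first by rewrite addn0.
by rewrite addnS (subset_trans (Fseries_sub1 _ _) IH).
Qed.

Lemma Fseries_subF (gT : finGroupType) (X : {group gT}) i :
  Fseries X i \subset 'F(X).
Proof. by case/andP: (Fseries_normal X i). Qed.
Lemma constt_in (gT : finGroupType) (G : {group gT}) x (p : nat) :
  x \in G -> x.`_p ^+ p \in G.
Proof. by move=> xG; rewrite /constt !groupX. Qed.

Lemma morph_Fseries (gT rT : finGroupType) (X : {group gT})
    (f : {morphism X >-> rT}) (Y : {group rT}) :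
  f @* 'F(X) = 'F(Y) -> forall i, f @* Fseries X i = Fseries Y i.
Proof.
move=> fF; elim=> [|i IH] //.
have sFX : 'F(X) \subset X := Fitting_sub X.
have sVX : Fseries X i \subset X := subset_trans (Fseries_subF X i) sFX.
have sV1X : Fseries X i.+1 \subset X := subset_trans (Fseries_sub1 X i) sVX.
apply/eqP; rewrite eqEsubset; apply/andP; split.
  set M := Fseries Y i.+1.
  have [nMF sMV cM pM] := Fseries_cond Y i.
  have sMFY : M \subset 'F(Y) := subset_trans sMV (Fseries_subF Y i).
  have sFYim : 'F(Y) \subset f @* X by rewrite -fF morphimS.
  rewrite sub_morphim_pre //.
  apply: subset_trans (subsetIr (Fseries X i) _).
  apply: (Fseries_min (N := (Fseries X i :&: f @*^-1 M)%G)).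
  have [sVF nVF] := andP (Fseries_normal X i).
  split.
  - rewrite /normal subIset ?sVF //= normsI //.
    have : f @*^-1 M <| f @*^-1 'F(Y).
      by rewrite morphpre_normal // (subset_trans sMFY).
    case/andP=> _; apply: subset_trans.
    by rewrite -sub_morphim_pre // fF.
  - exact: subsetIl.
  - rewrite subsetI commg_subl nVF /= -sub_morphim_pre.
      by rewrite morphimR // fF IH.
    by apply: subset_trans sFX; rewrite commg_subr (subset_trans sVF) ?normG.
  move=> x p xV pr; rewrite inE constt_in //=.
  have xX : x \in X := subsetP sVX x xV.
  apply: mem_morphpre; first by rewrite /constt !groupX.
  rewrite morphX ?morph_constt //; last by rewrite /constt groupX.
  by apply: pM => //; rewrite -IH mem_morphim.
apply: Fseries_min.
have [nNF sNV cN pN] := Fseries_cond X i.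
split.
- by rewrite -fF; apply: morphim_normal.
- by rewrite -IH morphimS.
- by rewrite -IH -fF -morphimR // morphimS.
move=> y p; rewrite -IH => /morphimP [x xX xV ->] pr.
rewrite -morph_constt // -morphX; last by rewrite /constt groupX.
by rewrite mem_morphim ?pN // constt_in.
Qed.
Lemma max_nil_normal (gT : finGroupType) (F M : {group gT}) :
  nilpotent F -> maximal M F -> M <| F /\ prime #|F : M|.
Proof.
move=> nilF maxM; have [pMF maxH] := maxgroupP maxM.
have pN := nilpotent_proper_norm nilF pMF.
have nMF : F \subset 'N(M).
  have [eqN | neqN] := eqVneq 'N_F(M) F.
    by rewrite -eqN subsetIr.
  have pNF : 'N_F(M) \proper F by rewrite properEneq neqN subsetIl.
  have := maxH _ pNF (proper_sub pN) => eNM.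
  by move: pN; rewrite eNM properE subxx.
have nsMF : M <| F by rewrite /normal (proper_sub pMF) nMF.
split=> //; apply: index_maxnormal_sol_prime (nilpotent_sol nilF) _.
apply/maxgroupP; split; first by rewrite pMF nMF.
by move=> H /andP[pH _]; apply: maxH.
Qed.

Lemma nu1_Phi (gT : finGroupType) (X : {group gT}) :
  Fseries X 1 \subset 'Phi('F(X)).
Proof.
apply/bigcapsP => M; case/predU1P => [-> | maxM]; first exact: Fseries_subF.
have nilF := Fitting_nil X.
have [nsMF prM] := max_nil_normal nilF maxM.
have [sMF nMF] := andP nsMF.
apply: Fseries_min; split=> //=.
- have abQ : abelian ('F(X) / M).
    by apply/cyclic_abelian/prime_cyclic; rewrite card_quotient.
  by rewrite -derg1 der1_min.
move=> x p xF pr.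
have xN : x \in 'N(M) := subsetP nMF x xF.
apply: coset_idr; first by rewrite (subsetP nMF) // constt_in.
rewrite morphX /=; last by rewrite /constt groupX.
rewrite morph_constt //.
have yQ : coset M x \in 'F(X) / M by apply: mem_quotient.
have [dp | ndp] := boolP (p %| #|'F(X) / M|).
  have : p = #|'F(X) / M|.
    by apply/eqP; rewrite -dvdn_prime2 // card_quotient.
  by move=> ->; apply: expg_cardG; rewrite /constt groupX.
by rewrite (constt_p_triv yQ pr ndp) expg1n.
Qed.

Lemma Phi_Fitting_sub (gT : finGroupType) (X : {group gT}) :
  'Phi('F(X)) \subset 'Phi(X).
Proof.
set F := 'F(X).
have sPF : 'Phi(F) \subset F := Phi_sub F.
have sFX : F \subset X := Fitting_sub X.
have nsPX : 'Phi(F) <| X := char_normal_trans (Phi_char F) (Fitting_normal X).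
apply/bigcapsP => M; case/predU1P => [-> | maxM]; first exact: subset_trans sPF sFX.
have [pMX maxH] := maxgroupP maxM.
apply/idPn => nPM.
have nPM' : M \subset 'N('Phi(F)) := subset_trans (proper_sub pMX) (normal_norm nsPX).
have eK : M <*> 'Phi(F) = X.
  have sKX : M <*> 'Phi(F) \subset X.
    by rewrite join_subG (proper_sub pMX) (subset_trans sPF sFX).
  have [eq | neq] := eqVneq (M <*> 'Phi(F)) X => //.
  have pK : (M <*> 'Phi(F))%G \proper X by rewrite properEneq neq sKX.
  have := maxH _ pK (joing_subl _ _) => eKM.
  by move: nPM; rewrite -eKM /= joing_subr.
have eF : (F :&: M) * 'Phi(F) = F.
  rewrite group_modr //; apply/setIidPl.
  by rewrite -(norm_joinEl nPM') eK.
have : <<F :&: M>> = F.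
  have nIP : F :&: M \subset 'N('Phi(F)).
    by rewrite (subset_trans _ (normal_norm (Phi_normal F))) // subsetIl.
  apply: Phi_nongen; rewrite (norm_joinEr nIP) -(normC nIP).
  exact: eF.
move=> eG; move: nPM; rewrite (subset_trans sPF) //.
by rewrite -eG gen_subG subsetIr.
Qed.

Lemma nu1_Phi_X (gT : finGroupType) (X : {group gT}) :
  Fseries X 1 \subset 'Phi(X).
Proof. exact: subset_trans (nu1_Phi X) (Phi_Fitting_sub X). Qed.
Lemma gaschutz (gT rT : finGroupType) (H : {group gT}) (q : {morphism H >-> rT}) :
  'ker q \subset 'Phi(H) -> q @*^-1 'F(q @* H) \subset 'F(H).
Proof.
move=> sKPhi.
have HK : q @*^-1 (q @* H) = H.
  by apply: morphimGK; [apply: subsetIl | apply: subxx].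
set G := q @* H.
have sFG : 'F(G) \subset q @* H := Fitting_sub _.
rewrite -(Sylow_gen (q @*^-1 'F(G))%G) gen_subG.
apply/bigcupsP => S /SylowP [p pr sylS].
set P := (q @*^-1 'F(G))%G.
have sPH : P \subset H by apply: subsetIl.
have sSP : S \subset P := pHall_sub sylS.
have sSH : S \subset H := subset_trans sSP sPH.
have qP : q @* P = 'F(G) by rewrite morphpreK.
have hallqS : p.-Sylow('F(G)) (q @* S) by rewrite -qP morphim_pHall.
have eqS : q @* S = 'O_p(G).
  by rewrite -p_core_Fitting (nilpotent_Hall_pcore (Fitting_nil G) hallqS).
set K := (q @*^-1 (q @* S))%G.
have nsKH : K <| H.
  rewrite -[X in K <| X]HK /K morphpre_normal ?morphimS //.
  by move: (pcore_normal p G); rewrite -eqS.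
have sSK : S \subset K by rewrite /K -sub_morphim_pre.
have sKP : K \subset P.
  by rewrite /K /P morphpreS // (subset_trans (morphimS q sSP)) // qP.
have sylSK : p.-Sylow(K) S := pHall_subl sSK sKP sylS.
have eH := Frattini_arg nsKH sylSK.
have eK : (K : {set gT}) = 'ker q * S by rewrite /K /= morphimK.
have sSN : S \subset 'N_H(S) by rewrite subsetI sSH normG.
have eH2 : 'ker q * 'N_H(S) = H.
  transitivity ((K : {set gT}) * 'N_H(S)); last exact: eH.
  by rewrite eK -mulgA (mulSGid sSN).
have eJ : 'Phi(H) <*> 'N_H(S) = H.
  apply/eqP; rewrite eqEsubset join_subG Phi_sub subsetIl /=.
  by rewrite -{1}eH2 mul_subG // ?joing_subr // (subset_trans sKPhi) ?joing_subl.
have := Phi_nongen eJ; rewrite genGid => eN.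
have nSH : H \subset 'N(S) by rewrite -eN subsetIr.
have nsSH : S <| H by rewrite /normal sSH nSH.
rewrite (subset_trans (pcore_max (pHall_pgroup sylS) nsSH)) //.
by rewrite -p_core_Fitting pcore_sub.
Qed.
Lemma central_ext_nil (sT gT : finGroupType) (Gs : {group sT})
    (pi : {morphism Gs >-> gT}) (A : {group gT}) :
  nilpotent A -> [~: 'ker pi, pi @*^-1 A] = 1 -> nilpotent (pi @*^-1 A).
Proof.
move=> nilA cKP.
set P := (pi @*^-1 A)%G.
have sKP : 'ker pi \subset P := ker_sub_pre pi A.
have sPGs : P \subset Gs := subsetIl _ _.
have sKZ : 'ker pi \subset 'Z(P).
  by rewrite subsetI sKP; apply/commG1P.
have nsKP : 'ker pi <| P := normalS sKP sPGs (ker_normal pi).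
have nilPK : nilpotent (P / 'ker pi).
  have iso := first_isog_loc pi sPGs.
  have eK : 'ker_P pi = 'ker pi by apply/setIidPr.
  have nil1 : nilpotent (pi @* P).
    by apply: nilpotentS nilA; rewrite sub_morphim_pre.
  have iso' : P / 'ker pi \isog pi @* P by rewrite -eK.
  by rewrite (isog_nil iso').
rewrite -quotient_center_nil.
rewrite -(isog_nil (third_isog sKZ nsKP (center_normal P))).
exact: quotient_nil.
Qed.
Lemma p_index_nu1 (hT : finGroupType) (X : {group hT}) x p :
  x \in 'F(X) -> prime p -> p \in \pi(#[x]) ->
  p %| #|'F(X) : Fseries X 1|.
Proof.
move=> xF pr ppi; apply/idPn => ndp.
set F := 'F(X); set W := Fseries X 1.
have nilF : nilpotent F := Fitting_nil X.
have [sWF nWF] := andP (Fseries_normal X 1).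
have sWPhi : W \subset 'Phi(F) := nu1_Phi X.
set P := 'O_p(F).
have sPF : P \subset F := pcore_sub _ _.
have sPW : P \subset W.
  rewrite -quotient_sub1 ?(subset_trans sPF nWF) //.
  have c1 : #|P / W| = 1%N.
    apply: (@pnat_1 p); first exact: quotient_pgroup (pcore_pgroup _ _).
    apply: pnat_dvd (cardSg (quotientS W sPF)) _.
    by rewrite card_quotient // p'natE.
  have : (P / W)%G == 1%G :> {set _} by rewrite trivg_card1 c1.
  by move/eqP => /= ->.
have eJ : 'Phi(F) <*> 'O_p^'(F) = F.
  apply/eqP; rewrite eqEsubset join_subG Phi_sub pcore_sub /=.
  have eF := dprodW (nilpotent_pcoreC p nilF).
  apply: subset_trans (_ : 'O_p(F) * 'O_p^'(F) \subset _); first by rewrite eF.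
  rewrite mul_subG ?joing_subr //.
  exact: subset_trans sPW (subset_trans sWPhi (joing_subl _ _)).
have := Phi_nongen eJ; rewrite genGid => eO.
have xpF : x.`_p \in F by rewrite /constt groupX.
have p'x : p^'.-elt x.`_p.
  by apply: mem_p_elt (pcore_pgroup p^' F) _; rewrite eO.
have := pnat_1 (p_elt_constt p x) p'x.
rewrite order_constt => e1.
by move: ppi; rewrite -p_part_gt1 e1.
Qed.
Lemma morphim_tuple (aT rT : finGroupType) (D : {group aT})
    (f : {morphism D >-> rT}) n (a : n.-tuple aT) (b : n.-tuple rT) :
  (forall i, f (tnth a i) = tnth b i) -> [set y in a] \subset D ->
  f @* [set y in a] = [set y in b].
Proof.
move=> fab saD; apply/setP => y; apply/idP/idP.
  case/morphimP => x xD; rewrite inE => /tnthP [i ->] ->.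
  by rewrite inE fab mem_tnth.
rewrite inE => /tnthP [i ->]; rewrite -fab mem_morphim //.
  by rewrite (subsetP saD) // inE mem_tnth.
by rewrite inE mem_tnth.
Qed.

Lemma quot_morph (gT hT : finGroupType) (H : {group hT}) (N : {group hT})
    (G : {group gT}) :
  N <| H -> H / N \isog G ->
  exists q : {morphism H >-> gT}, 'ker q = N /\ q @* H = G.
Proof.
move=> nsNH isoHG; have [sNH nNH] := andP nsNH.
have [f injf fHN] := isogP isoHG.
have sH : H \subset coset N @*^-1 (H / N).
  by rewrite -sub_morphim_pre.
exists (restrm_morphism sH (f \o coset N)%g); split.
  rewrite ker_restrm ker_comp.
  have kf : 'ker f = 1 by apply/trivgP.
  rewrite kf -kerE ker_coset; exact/setIidPr.
by rewrite morphim_restrm setIid morphim_comp.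
Qed.
Lemma Fseries_normX (gT : finGroupType) (X : {group gT}) i :
  Fseries X i <| X.
Proof.
have sFX : Fseries X i \subset X :=
  subset_trans (Fseries_subF X i) (Fitting_sub X).
rewrite /normal sFX; apply/normsP => x xX.
have e1 : conjgm X x @* 'F(X) = 'F(X).
  by rewrite (injm_Fitting (injm_conj X x)) // morphim_conj setIid conjGid.
have := morph_Fseries e1 i; rewrite morphim_conj.
by rewrite (setIidPr sFX).
Qed.
Unset Implicit Arguments.
Set Strict Implicit.

Theorem theorem4p6 (gT sT : finGroupType) (G : {group gT}) (c n : nat)
    (g : n.-tuple gT) (Gs : {group sT}) (gs : n.-tuple sT)
    (pi : {morphism Gs >-> gT}) :
  0 < c ->
  Fclass G c ->
  G :=: <<[set y in g]>> ->
  is_covering_group G g gs pi ->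
  forall (hT : finGroupType) (H : {group hT}),
    descendant G c H ->
    exists U : {group sT}, allowable pi c U /\ H \isog Gs / U.
Proof.
move=> c_gt0 _ genG [ccGs univ] hT H [[nuc1 ntH] isoHG].
set N := Fseries H c.
have ntN : N :!=: 1 by have := ntH c (ltnSn c); apply: contra => /eqP e; apply/eqP; apply: val_inj.
have sNF : N \subset 'F(H) := Fseries_subF H c.
have sNH : N \subset H := subset_trans sNF (Fitting_sub H).
have nsNH : N <| H := Fseries_normX H c.
have [q [kerq qH]] := quot_morph nsNH isoHG.
have sNPhi : 'ker q \subset 'Phi(H).
  by rewrite kerq (subset_trans (Fseries_decr H c_gt0)) ?nu1_Phi_X.
have gas := gaschutz sNPhi; rewrite qH in gas.
have qF : q @* 'F(H) = 'F(G).
  apply/eqP; rewrite eqEsubset; apply/andP; split.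
    by have := morphim_Fitting H q; rewrite qH.
  rewrite -{1}(@morphpreK _ _ _ q 'F(G)) ?morphimS // qH Fitting_sub //.
have [_ _ cNF pN] := Fseries_cond H c.
rewrite nuc1 /= in cNF pN.
have gG : forall i, tnth g i \in G.
  by move=> i; rewrite genG mem_gen // inE mem_tnth.
have : forall i : 'I_n, exists x, x \in H /\ q x = tnth g i.
  move=> i; have := gG i; rewrite -qH => /morphimP [x _ xH ->].
  by exists x.
case/fin_all_exists => hf hfP.
set h := [tuple hf i | i < n].
have hP : forall i, tnth h i \in H /\ q (tnth h i) = tnth g i.
  by move=> i; rewrite tnth_mktuple.
have shH : [set y in h] \subset H.
  by apply/subsetP => y; rewrite inE => /tnthP [i ->]; case: (hP i).
have qh : q @* [set y in h] = [set y in g].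
  by apply: morphim_tuple => // i; case: (hP i).
have genH : H :=: <<[set y in h]>>.
  have e1 : q @* <<[set y in h]>> = G by rewrite morphim_gen // qh -genG.
  have e2 : 'ker q * <<[set y in h]>> = H.
    rewrite -morphimK ?gen_subG // e1 -qH.
    by apply: morphimGK; [apply: subsetIl | apply: subxx].
  have eJ : 'Phi(H) <*> <<[set y in h]>> = H.
    apply/eqP; rewrite eqEsubset join_subG Phi_sub gen_subG shH /=.
    rewrite -{1}e2 mul_subG ?joing_subr //.
    exact: subset_trans sNPhi (joing_subl _ _).
  by have := Phi_nongen eJ; rewrite (genGid (<<[set y in h]>>)%G) => ->.
have eFr : Frank G = #|'F(H) : Fseries H 1|.
  rewrite /Frank /= -qF -(morph_Fseries qF 1).
  have := index_morphim_ker q (Fseries_subF H 1) (Fitting_sub H).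
  have e1 : #|'ker_('F(H)) q : Fseries H 1| = 1%N.
    apply/eqP; rewrite kerq (setIidPr sNF) indexg_eq1.
    exact: Fseries_decr.
  by rewrite e1 muln1.
have ccH : cover_cond G g h q.
  split => //.
  - by move=> i; case: (hP i).
  - rewrite kerq; apply/trivgP; apply: subset_trans cNF.
    exact: commgSS.
  rewrite kerq; apply/exponentP => x xN; apply/eqP; rewrite -order_dvdn.
  apply/dvdn_partP; first exact: order_gt0.
  move=> p ppi.
  have pr : prime p by move: ppi; rewrite mem_primes => /andP[].
  have dF : p %| Frank G.
    by rewrite eFr; apply: p_index_nu1 (subsetP sNF x xN) pr ppi.
  apply: dvdn_trans (_ : p %| _).
    rewrite -order_constt order_dvdn; apply/eqP.
    by have := pN x p xN pr; rewrite inE => /eqP.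
  rewrite /Fk (big_rem p) /= ?dvdn_mulr // mem_primes pr dF andbT.
  exact: indexg_gt0.
have [phi phiE] := univ hT H h q ccH.
case: ccGs => genGs piE cKpi _.
have sgsGs : [set y in gs] \subset Gs.
  by rewrite genGs; apply: subset_gen.
have phiGs : phi @* Gs = H.
  have -> : phi @* Gs = phi @* <<[set y in gs]>> by rewrite -genGs.
  by rewrite morphim_gen // (morphim_tuple phiE sgsGs) -genH.
have piGs : pi @* Gs = G.
  have -> : pi @* Gs = pi @* <<[set y in gs]>> by rewrite -genGs.
  by rewrite morphim_gen // (morphim_tuple piE sgsGs) -genG.
have phiH : forall x, x \in Gs -> phi x \in H.
  by move=> x xGs; rewrite -phiGs mem_morphim.
have piqphi : forall x, x \in Gs -> pi x = q (phi x).
  have gE : group_set [set x in Gs | pi x == q (phi x)].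
    apply/group_setP; split; first by rewrite inE group1 /= (morph1 pi) (morph1 phi) (morph1 q).
    move=> x y; rewrite !inE => /andP[xG /eqP ex] /andP[yG /eqP ey].
    by rewrite groupM //= (morphM pi xG yG) (morphM phi xG yG) (morphM q (phiH x xG) (phiH y yG)) ex ey.
  have : Gs \subset Group gE.
    apply: subset_trans (_ : <<[set y in gs]>> \subset _); first by rewrite -genGs.
    rewrite gen_subG; apply/subsetP => y; rewrite inE => /tnthP [i ->].
    rewrite inE (subsetP sgsGs) ?inE ?mem_tnth //=.
    by rewrite piE phiE; case: (hP i) => _ ->.
  by move=> sG x xG; have := subsetP sG x xG; rewrite inE => /andP[_ /eqP].
have prepi : forall B, pi @*^-1 B = phi @*^-1 (q @*^-1 B).
  move=> B; apply/setP => x; apply/morphpreP/morphpreP => [[xG pB] | [xG /morphpreP [_ pB]]].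
    by split=> //; apply/morphpreP; split; [apply: phiH | rewrite -piqphi].
  by split=> //; rewrite piqphi.
have kerpi : 'ker pi = phi @*^-1 N by rewrite kerE prepi -kerE kerq.
have phiF : phi @* 'F(Gs) = 'F(H).
  apply/eqP; rewrite eqEsubset; apply/andP; split.
    by have := morphim_Fitting Gs phi; rewrite phiGs.
  have sFq : 'F(H) \subset q @*^-1 'F(G).
    by rewrite -sub_morphim_pre ?Fitting_sub // qF.
  apply: subset_trans sFq _.
  rewrite -(@morphpreK _ _ _ phi (q @*^-1 'F(G))); last by rewrite phiGs subsetIl.
  rewrite morphimS // -prepi.
  apply: Fitting_max; last exact: central_ext_nil (Fitting_nil G) cKpi.
  have : pi @*^-1 'F(G) <| pi @*^-1 G.
    by rewrite morphpre_normal ?piGs ?Fitting_sub ?Fitting_normal.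
  have -> // : pi @*^-1 G = Gs.
  rewrite -{1}piGs; apply: morphimGK; [apply: subsetIl | apply: subxx].
have L := morph_Fseries phiF c.
have sNuGs : Fseries Gs c \subset Gs :=
  subset_trans (Fseries_subF Gs c) (Fitting_sub Gs).
exists ('ker phi)%G; split; last first.
  by have := first_isog phi; rewrite phiGs isog_sym.
split.
- rewrite properEneq; apply/andP; split; last by rewrite kerpi; exact: ker_sub_pre.
  apply: contra ntN => /eqP e.
  rewrite -(@morphpreK _ _ _ phi N) ?phiGs // -kerpi -e morphim_ker.
  by [].
- exact: ker_normal.
rewrite kerpi -L morphimK //; apply/esym/normC.
exact: subset_trans sNuGs (normal_norm (ker_normal phi)).
Qed.
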